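(* For any $F\in\mathscr{F}_2$ and $i\in[F]$: (i) $\mathcal{P}^2_{\ddot{F},i}=\{01,10,11\}$ if $|\mathcal{P}^2_{F,i}|=3$, and $\mathcal{P}^2_{\ddot{F},i}=\{00,01,10,11\}$ if $|\mathcal{P}^2_{F,i}|=4$; (ii) for any $s\in\mathcal{S}$, $\bar{\mathcal{P}}^2_{\ddot{F},i}(\ddot{f}_i(s))=\emptyset$ if $\bar{\mathcal{P}}^0_{F,i}(f_i(s))=\emptyset$, and $\bar{\mathcal{P}}^2_{\ddot{F},i}(\ddot{f}_i(s))=\{00\}$ if $\bar{\mathcal{P}}^0_{F,i}(f_i(s))\ne\emptyset$.
   Context: $\mathcal{S}$ is a finite source alphabet with $|\mathcal{S}|\ge 2$ and $\mathcal{C}=\{0,1\}$; $\mathcal{A}^k,\mathcal{A}^{\ast},\mathcal{A}^{+}$ are sequences of length $k$, finite, positive finite length; $\lambda$ empty sequence; $\preceq$ prefix, $\prec$ proper prefix; $\mathrm{suff}(x_1\cdots x_n)=x_2\cdots x_n$; $\bar{c}=1-c$ for $c\in\mathcal{C}$. A code-tuple $F$ with $m\ge1$ code tables consists of maps $f_i:\mathcal{S}\to\mathcal{C}^{\ast}$ and $\tau_i:\mathcal{S}\to\{0,\dots,m-1\}$, $i\in[F]=\{0,\dots,m-1\}$. $f_i^{\ast}(\lambda)=\lambda$, $f_i^{\ast}(\pmb{x})=f_i(x_1)f^{\ast}_{\tau_i(x_1)}(\mathrm{suff}(\pmb{x}))$. For integer $k\ge0$, $\pmb{b}\in\mathcal{C}^{\ast}$: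 $\mathcal{P}^k_{F,i}(\pmb{b})$ is the set of $\pmb{c}\in\mathcal{C}^k$ such that some $\pmb{x}=x_1\cdots x_n\in\mathcal{S}^{+}$ has $f_i^{\ast}(\pmb{x})\succeq\pmb{b}\pmb{c}$ and $f_i(x_1)\succeq\pmb{b}$; $\bar{\mathcal{P}}^k_{F,i}(\pmb{b})$ the same with $f_i(x_1)\succ\pmb{b}$; $\mathcal{P}^k_{F,i}=\mathcal{P}^k_{F,i}(\lambda)$. $F\in\mathscr{F}_{2\text{-}\mathrm{dec}}$ if $\mathcal{P}^2_{F,\tau_i(s)}\cap\bar{\mathcal{P}}^2_{F,i}(f_i(s))=\emptyset$ for all $i,s$, and $\mathcal{P}^2_{F,\tau_i(s)}\cap\mathcal{P}^2_{F,\tau_i(s')}=\emptyset$ whenever $s\ne s'$, $f_i(s)=f_i(s')$. Fix $\mu:\mathcal{S}\to(0,1]$ with $\sum_s\mu(s)=1$; $Q_{i,j}(F)=\sum_{s:\tau_i(s)=j}\mu(s)$; $F\in\mathscr{F}_{\mathrm{reg}}$ if $\pmb{\pi}Q(F)=\pmb{\pi}$, $\sum_i\pi_i=1$ has a unique solution. $\mathscr{F}_2=\{F\in\mathscr{F}_{\mathrm{reg}}\cap\mathscr{F}_{2\text{-}\mathrm{dec}}:|\mathcal{P}^2_{F,i}|\ge3\ \forall i\in[F]\}$ (every such $F$ satisfies $\mathcal{P}^1_{F,i}=\{0,1\}$ for all $i$). $\gamma$-decomposition: for $F\in\mathscr{F}_2$, $i\in[F]$, $s\in\mathcal{S}$,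 the symbols $s'$ with $f_i(s')\prec f_i(s)$ have pairwise distinct codewords; list them together with $s$ as $s_1,\dots,s_\rho$ with $s_\rho=s$ and $f_i(s_1)\prec\cdots\prec f_i(s_\rho)$; set $\gamma(s_1)=f_i(s_1)$ and $f_i(s_r)=f_i(s_{r-1})\gamma(s_r)$ for $r\ge2$. The code-tuple $\ddot{F}$ (with $|F|$ tables): $\ddot{\tau}_i=\tau_i$ and $\ddot{f}_i(s)=\ddot{\gamma}(s_1)\cdots\ddot{\gamma}(s_\rho)$ where, writing $\gamma(s_r)=g_1g_2\cdots g_l$: $\ddot{\gamma}(s_r)=\gamma(s_r)$ if $r=1$ and $|\mathcal{P}^2_{F,i}|=4$; $\ddot{\gamma}(s_r)=1$ if $r=1$, $|\mathcal{P}^2_{F,i}|=3$, $|\gamma(s_r)|=1$; $\ddot{\gamma}(s_r)=01g_3\cdots g_l$ if $r=1$, $|\mathcal{P}^2_{F,i}|=3$, $|\gamma(s_r)|\ge2$, $g_1\bar{g_2}\notin\mathcal{P}^2_{F,i}$; $\ddot{\gamma}(s_r)=1g_2g_3\cdots g_l$ if $r=1$, $|\mathcal{P}^2_{F,i}|=3$, $|\gamma(s_r)|\ge2$, $g_1\bar{g_2}\in\mathcal{P}^2_{F,i}$; $\ddot{\gamma}(s_r)=00g_3\cdots g_l$ if $r\ge2$. *)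

(* Defs.v *)
From HB Require Import structures.
From mathcomp Require Import all_boot all_order all_algebra.
From mathcomp Require Import boolp reals.
Set Implicit Arguments. Unset Strict Implicit. Unset Printing Implicit Defensive.
Import Order.TTheory GRing.Theory Num.Theory.

(* Code alphabet C = {0,1} is bool (false = 0, true = 1).
   A code-tuple with m tables over source alphabet S. *)
Record code_tuple (S : finType) (m : nat) := CodeTuple {
  ct_f   : 'I_m -> S -> seq bool;
  ct_tau : 'I_m -> S -> 'I_m }.

Section CodeTuple.
Variables (S : finType) (m : nat).
Implicit Types (F : code_tuple S m) (i : 'I_m) (b w : seq bool).

Definition pprefix b w : bool := prefix b w && (size b < size w).

Fixpoint fstar F i (x : seq S) : seq bool :=
  match x with
  | [::] => [::]
  | a :: x' => ct_f F i a ++ fstar F (ct_tau F i a) x'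
  end.

Definition Pk F i b (k : nat) : {set k.-tuple bool} :=
  [set c : k.-tuple bool | `[< exists (x1 : S) (x' : seq S),
      prefix (b ++ val c) (fstar F i (x1 :: x')) /\ prefix b (ct_f F i x1) >]].

Definition Pbark F i b (k : nat) : {set k.-tuple bool} :=
  [set c : k.-tuple bool | `[< exists (x1 : S) (x' : seq S),
      prefix (b ++ val c) (fstar F i (x1 :: x')) /\ pprefix b (ct_f F i x1) >]].

Definition P2 F i : {set 2.-tuple bool} := Pk F i [::] 2.

Definition two_dec F : Prop :=
  (forall i (s : S), P2 F (ct_tau F i s) :&: Pbark F i (ct_f F i s) 2 = set0) /\
  (forall i (s s' : S), s != s' -> ct_f F i s = ct_f F i s' ->
      P2 F (ct_tau F i s) :&: P2 F (ct_tau F i s') = set0).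

Section Reg.
Variable (R : realType) (mu : S -> R).

Definition Qmx F : 'M[R]_m :=
  \matrix_(i < m, j < m) (\sum_(s : S | ct_tau F i s == j) mu s)%R.

Definition regular F : Prop :=
  exists! pi : 'rV[R]_m, (pi *m Qmx F)%R = pi /\ (\sum_(j < m) pi ord0 j)%R = 1%R.

Definition in_F2 F : Prop :=
  regular F /\ two_dec F /\ (forall i, 3 <= #|P2 F i|).
End Reg.

(* gamma-decomposition: the chain f_i(s_1) < ... < f_i(s_rho) = f_i(s)
   consists of the codewords (of table i) that are proper prefixes of f_i(s),
   followed by f_i(s); sorted by length (they form a prefix chain). *)
Definition chain F i (s : S) : seq (seq bool) :=
  sort (fun u v => size u <= size v)
       (undup [seq ct_f F i s' | s' <- enum S & pprefix (ct_f F i s') (ct_f F i s)])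
  ++ [:: ct_f F i s].

Definition gammas F i (s : S) : seq (seq bool) :=
  pairmap (fun u v => drop (size u) v) [::] (chain F i s).

Definition ddgamma_first F i (g : seq bool) : seq bool :=
  if #|P2 F i| == 4 then g
  else if #|P2 F i| == 3 then
    match g with
    | [:: _] => [:: true]
    | g1 :: g2 :: rest =>
        if [tuple g1; ~~ g2] \in P2 F i then true :: g2 :: rest
        else [:: false, true & rest]
    | [::] => [::] (* case not covered by the paper *)
    end
  else g (* case not covered by the paper *).

Definition ddgamma_rest (g : seq bool) : seq bool := [:: false, false & drop 2 g].

Definition ddot_f F i (s : S) : seq bool :=
  match gammas F i s with
  | [::] => [::]
  | g1 :: gs => flatten (ddgamma_first F i g1 :: map ddgamma_rest gs)
  end.

Definition ddot F : code_tuple S m := CodeTuple (ddot_f F) (ct_tau F).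

End CodeTuple.

(* Main.v *)
Require Import Defs.
From HB Require Import structures.
From mathcomp Require Import all_boot all_order all_algebra.
From mathcomp Require Import boolp reals.
From mathcomp Require Import zify.
Set Implicit Arguments. Unset Strict Implicit. Unset Printing Implicit Defensive.

Definition t2 (x y : bool) : 2.-tuple bool := [tuple x; y].

Lemma tuple2E (c : 2.-tuple bool) : exists x y, c = t2 x y.
Proof. case: c => [[|x [|y []]] //= Hc]; exists x, y; exact: val_inj. Qed.

Lemma t2_inj x y x' y' : (t2 x y == t2 x' y') = (x == x') && (y == y').
Proof.
apply/eqP/andP => [H|[/eqP-> /eqP->]] //.
have := congr1 val H => /= [[-> ->]]; by split.
Qed.

Lemma card4 (A : {set 2.-tuple bool}) : #|A| =
  (t2 false false \in A) + (t2 false true \in A) + (t2 true false \in A) + (t2 true true \in A).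
Proof.
rewrite -sum1_card big_mkcond /=.
have -> : \sum_(i : 2.-tuple bool) (if i \in A then 1 else 0) =
   \sum_(i <- [:: t2 false false; t2 false true; t2 true false; t2 true true]) (if i \in A then 1 else 0).
  rewrite [RHS]big_uniq //.
  apply: congr_big => // c; case: (tuple2E c) => x [y ->].
  by case: x; case: y; rewrite /= !in_cons !t2_inj.
rewrite !big_cons big_nil.
by do 4 case: (_ \in A); rewrite /=.
Qed.

Definition comp (u v : seq bool) := prefix u v || prefix v u.

Lemma compC u v : comp u v = comp v u.
Proof. by rewrite /comp orbC. Qed.

Lemma comp_cons x y u v : comp (x :: u) (y :: v) = (x == y) && comp u v.
Proof. rewrite /comp !prefix_cons [y == x]eq_sym; by case: (x == y). Qed.

Lemma comp0s v : comp [::] v.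
Proof. by rewrite /comp prefix0s. Qed.

Lemma prefix_take_size (u w : seq bool) : prefix u w -> take (size u) w = u.
Proof. by rewrite prefixE => /eqP. Qed.

Lemma prefix_le (u v w : seq bool) : prefix u w -> prefix v w -> size u <= size v -> prefix u v.
Proof.
move=> /prefix_take_size Hu /prefix_take_size Hv Hs.
by rewrite prefixE -Hv take_takel // Hu.
Qed.

Lemma prefix_comp (u v w : seq bool) : prefix u w -> prefix v w -> comp u v.
Proof.
move=> Hu Hv; rewrite /comp; case: (leqP (size u) (size v)) => H.
  by rewrite (prefix_le Hu Hv H).
by rewrite (prefix_le Hv Hu (ltnW H)) orbT.
Qed.

Lemma prefix_catl2 (u v w : seq bool) : prefix (u ++ v) (u ++ w) = prefix v w.
Proof. by rewrite prefix_catr // eqxx. Qed.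

Lemma pprefixE (u v : seq bool) : pprefix u v = prefix u v && (u != v).
Proof.
rewrite /pprefix; case: (prefixP) => //= [[z ->]].
rewrite size_cat; case: z => [|a z]; first by rewrite cats0 addn0 ltnn eqxx.
rewrite /= addnS ltnS leq_addr; symmetry; apply/negP => /eqP/(congr1 size); rewrite size_cat /=; lia.
Qed.

Lemma pprefix_trans : transitive (@pprefix).
Proof.
move=> v u w /andP[H1 H2] /andP[H3 H4]; apply/andP; split.
  exact: prefix_trans H1 H3.
exact: ltn_trans H2 H4.
Qed.

Lemma pprefix_irr : irreflexive (@pprefix).
Proof. by move=> u; rewrite /pprefix ltnn andbF. Qed.

Lemma pprefixW (u v : seq bool) : pprefix u v -> prefix u v.
Proof. by case/andP. Qed.

Lemma prefix_pprefix_trans (u v w : seq bool) : prefix u v -> pprefix v w -> pprefix u w.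
Proof.
move=> H1 /andP[H2 H3]; apply/andP; split; first exact: prefix_trans H1 H2.
exact: leq_ltn_trans (size_prefix H1) H3.
Qed.

Lemma pprefix_prefix_trans (u v w : seq bool) : pprefix u v -> prefix v w -> pprefix u w.
Proof.
move=> /andP[H1 H2] H3; apply/andP; split; first exact: prefix_trans H1 H3.
exact: leq_trans H2 (size_prefix H3).
Qed.

Lemma disj_card (A B : {set 2.-tuple bool}) : A :&: B = set0 -> #|A| + #|B| <= 4.
Proof.
move=> H; have := max_card (A :|: B).
by rewrite cardsU H cards0 subn0 card_tuple card_bool.
Qed.

Lemma card3E (A : {set 2.-tuple bool}) : #|A| = 3 ->
  exists a b, t2 a b \notin A /\ forall x y, t2 x y \notin A -> x = a /\ y = b.
Proof.
rewrite card4.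
case E00: (t2 false false \in A); case E01: (t2 false true \in A);
case E10: (t2 true false \in A); case E11: (t2 true true \in A) => //= _.
- exists true, true; split; first by rewrite E11.
  by case; case; rewrite ?E00 ?E01 ?E10 ?E11.
- exists true, false; split; first by rewrite E10.
  by case; case; rewrite ?E00 ?E01 ?E10 ?E11.
- exists false, true; split; first by rewrite E01.
  by case; case; rewrite ?E00 ?E01 ?E10 ?E11.
- exists false, false; split; first by rewrite E00.
  by case; case; rewrite ?E00 ?E01 ?E10 ?E11.
Qed.

Lemma card4E (A : {set 2.-tuple bool}) : #|A| = 4 -> forall x y, t2 x y \in A.
Proof.
rewrite card4.
case E00: (t2 false false \in A); case E01: (t2 false true \in A);
case E10: (t2 true false \in A); case E11: (t2 true true \in A) => //= _.
by case; case.
Qed.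

Section Gen.
Variables (S : finType) (m : nat).
Implicit Types (F : code_tuple S m).

Lemma P2P F k c : reflect (exists x1 x', prefix (val c) (fstar F k (x1 :: x'))) (c \in P2 F k).
Proof.
rewrite /P2 /Pk inE; apply: (iffP (asboolP _)) => [[x1 [x' [H _]]]|[x1 [x' H]]]; exists x1, x' => //.
by rewrite prefix0s.
Qed.

Lemma PbarP F k b n c : reflect (exists x1 x', prefix (b ++ val c) (fstar F k (x1 :: x')) /\ pprefix b (ct_f F k x1)) (c \in Pbark F k b n).
Proof. rewrite /Pbark inE; exact: asboolP. Qed.

Lemma P1 F k g : 3 <= #|P2 F k| -> exists x1 x', prefix [:: g] (fstar F k (x1 :: x')).
Proof.
move=> H.
have : (t2 g false \in P2 F k) || (t2 g true \in P2 F k).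
  move: H; rewrite card4; case: g; do 4 case: (_ \in P2 F k) => //.
case/orP => /P2P [x1 [x' Hp]]; exists x1, x'; exact: (@catl_prefix _ [:: g] _ [:: _] Hp).
Qed.

End Gen.

Lemma fstar_cons (S : finType) (m : nat) (F : code_tuple S m) k a x :
  fstar F k (a :: x) = ct_f F k a ++ fstar F (ct_tau F k a) x.
Proof. by []. Qed.

Lemma fstar_nil (S : finType) (m : nat) (F : code_tuple S m) k : fstar F k [::] = [::].
Proof. by []. Qed.

Arguments fstar : simpl never.

Lemma val_t2 a b : val (t2 a b) = [:: a] ++ [:: b].
Proof. by []. Qed.

Lemma comp_cat (x u v : seq bool) : comp (x ++ u) (x ++ v) = comp u v.
Proof. by rewrite /comp !prefix_catl2. Qed.

Lemma prefix_mem (T : eqType) (l1 l2 : seq T) x : prefix l1 l2 -> x \in l1 -> x \in l2.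
Proof. by case/prefixP => z ->; rewrite mem_cat => ->. Qed.

Section Main.
Variables (S : finType) (m : nat) (F : code_tuple S m).
Hypothesis HS : 1 < #|S|.
Hypothesis Hdec : two_dec F.
Hypothesis H3 : forall k, 3 <= #|P2 F k|.

Local Notation f := (ct_f F).
Local Notation tau := (ct_tau F).

Lemma H34 k : (#|P2 F k| = 3) \/ (#|P2 F k| = 4).
Proof.
have := H3 k; have := max_card (P2 F k); rewrite card_tuple card_bool => ? ?; lia.
Qed.

Lemma Pbar_uniq k s c c' : c \in Pbark F k (f k s) 2 -> c' \in Pbark F k (f k s) 2 -> c = c'.
Proof.
move=> Hc Hc'; apply/eqP; apply/negPn/negP => Hne.
have := disj_card (Hdec.1 k s).
have : #|[set c; c']| <= #|Pbark F k (f k s) 2|.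
  apply: subset_leq_card; apply/subsetP => z; rewrite in_set2 => /orP[/eqP->|/eqP->] //.
rewrite cards2 Hne; have := H3 (tau k s); lia.
Qed.

Lemma ext_long k s t g : f k t = f k s ++ g -> g != [::] -> 2 <= size g.
Proof.
case: g => [|a [|b g]] Ht // _.
have [x1 [x' H0]] := P1 false (H3 (tau k t)).
have [y1 [y' H1]] := P1 true (H3 (tau k t)).
have Hp : pprefix (f k s) (f k t) by rewrite Ht /pprefix prefix_prefix size_cat addn1 ltnSn.
have M0 : t2 a false \in Pbark F k (f k s) 2.
  apply/PbarP; exists t, (x1 :: x'); split => //.
  by rewrite fstar_cons Ht -catA prefix_catl2 val_t2 prefix_catl2.
have M1 : t2 a true \in Pbark F k (f k s) 2.
  apply/PbarP; exists t, (y1 :: y'); split => //.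
  by rewrite fstar_cons Ht -catA prefix_catl2 val_t2 prefix_catl2.
by have := Pbar_uniq M0 M1 => /eqP; rewrite t2_inj andbF.
Qed.

Lemma ext_same k s t t' g g' : f k t = f k s ++ g -> f k t' = f k s ++ g' ->
  g != [::] -> g' != [::] -> take 2 g = take 2 g'.
Proof.
move=> Ht Ht' Hg Hg'.
have := ext_long Ht Hg; have := ext_long Ht' Hg'.
case: g Ht Hg => [|a [|b r]] Ht // _; case: g' Ht' Hg' => [|a' [|b' r']] Ht' // _ _ _.
have M : t2 a b \in Pbark F k (f k s) 2.
  apply/PbarP; exists t, [::]; split.
    by rewrite fstar_cons Ht fstar_nil cats0 prefix_catl2 /= ?prefix_cons !eqxx ?prefix0s.
  by rewrite Ht pprefixE prefix_prefix /=; apply/eqP => /(congr1 size); rewrite size_cat /=; lia.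
have M' : t2 a' b' \in Pbark F k (f k s) 2.
  apply/PbarP; exists t', [::]; split.
    by rewrite fstar_cons Ht' fstar_nil cats0 prefix_catl2 /= ?prefix_cons !eqxx ?prefix0s.
  by rewrite Ht' pprefixE prefix_prefix /=; apply/eqP => /(congr1 size); rewrite size_cat /=; lia.
have := Pbar_uniq M M' => /eqP; rewrite t2_inj => /andP[/eqP E1 /eqP E2].
by rewrite E1 E2 !take_cons /= !take0.
Qed.

Lemma ext_exists k s t : pprefix (f k s) (f k t) -> exists c, c \in Pbark F k (f k s) 2.
Proof.
move=> Hp; have := Hp; rewrite pprefixE => /andP[/prefixP [g Hg] Hne].
have Hg0 : g != [::] by apply: contraNneq Hne => Eg; rewrite Hg Eg cats0.
have := ext_long Hg Hg0; case: g Hg Hg0 => [|a [|b r]] Hg _ //= _.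
exists (t2 a b); apply/PbarP; exists t, [::]; split => //.
by rewrite fstar_cons Hg fstar_nil cats0 prefix_catl2 /= ?prefix_cons !eqxx ?prefix0s.
Qed.

Lemma exists_other (s0 : S) : exists t, t != s0.
Proof.
case: (pickP (fun t => t != s0)) => [t Ht|H]; first by exists t.
have : #|[set: S]| <= #|[set s0]|.
  apply: subset_leq_card; apply/subsetP => t _; rewrite inE.
  by have := H t => /= /negbFE.
by rewrite cardsT cards1; move: HS; lia.
Qed.

Lemma empty_tau k s0 : f k s0 = [::] -> #|P2 F (tau k s0)| = 3 /\ #|P2 F k| = 4.
Proof.
move=> H0.
have [t Ht] := exists_other s0.
have Hsub : P2 F (tau k s0) :|: Pbark F k (f k s0) 2 \subset P2 F k.
  apply/subsetP => c; rewrite inE => /orP[/P2P [x1 [x' Hp]] | /PbarP [x1 [x' [Hp _]]]]; apply/P2P.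
  - by exists s0, (x1 :: x'); rewrite fstar_cons H0.
  - by exists x1, x'; rewrite H0 in Hp.
have [c Hc] : exists c, c \in Pbark F k (f k s0) 2.
  case Et: (f k t) => [|g r].
    have Hne : s0 != t by rewrite eq_sym.
    have := disj_card (Hdec.2 k s0 t Hne (etrans H0 (esym Et))).
    have := H3 (tau k s0); have := H3 (tau k t); lia.
  by apply: (ext_exists (t := t)); rewrite H0 Et.
have := subset_leq_card Hsub; rewrite cardsU (Hdec.1 k s0) cards0 subn0.
have : #|[set c]| <= #|Pbark F k (f k s0) 2|.
  by apply: subset_leq_card; apply/subsetP => z; rewrite in_set1 => /eqP->.
rewrite cards1; have := H3 (tau k s0); have := max_card (P2 F k); rewrite card_tuple card_bool.
lia.
Qed.


Definition cw k (u : seq bool) := [exists s, f k s == u].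

Lemma cwP k u : reflect (exists s, f k s = u) (cw k u).
Proof. by apply: (iffP existsP) => [[s /eqP]|[s /eqP]]; exists s. Qed.

Lemma cw_f k s : cw k (f k s).
Proof. by apply/cwP; exists s. Qed.

Lemma mem_chain k s u : (u \in chain F k s) = cw k u && prefix u (f k s).
Proof.
rewrite /chain mem_cat mem_sort mem_undup inE.
apply/idP/idP.
- case/orP => [/mapP [s'] | /eqP ->].
    by rewrite mem_filter => /andP [Hp _] ->; rewrite cw_f pprefixW.
  by rewrite cw_f prefix_refl.
- case/andP => /cwP [s' <-] Hp.
  case: (eqVneq (f k s') (f k s)) => [->|Hne]; first by rewrite orbT.
  rewrite orbF; apply/mapP; exists s' => //.
  by rewrite mem_filter mem_enum andbT pprefixE Hp Hne.
Qed.

Lemma pairwise_pp (w : seq bool) l : pairwise (fun u v : seq bool => size u <= size v) l ->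
  uniq l -> all (fun u => prefix u w) l -> pairwise (@pprefix) l.
Proof.
elim: l => [//|x l IH] /= /andP[Hx Hl] /andP[Hxl Hu] /andP[Hxw Hw].
rewrite IH // andbT.
apply/allP => y Hy; rewrite pprefixE (prefix_le Hxw (allP Hw y Hy) (allP Hx y Hy)) /=.
by apply: contraNneq Hxl => ->.
Qed.

Lemma chain_sorted k s : sorted (@pprefix) (chain F k s).
Proof.
rewrite sorted_pairwise; last exact: pprefix_trans.
have Hmem : forall u, u \in sort (fun u v : seq bool => size u <= size v)
     (undup [seq f k s' | s' <- enum S & pprefix (f k s') (f k s)]) -> pprefix u (f k s).
  move=> u; rewrite mem_sort mem_undup => /mapP [s'].
  by rewrite mem_filter => /andP[Hp _] ->.
rewrite /chain pairwise_cat /= andbT allrel1r; apply/andP; split.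
  by apply/allP => u /Hmem.
apply: (pairwise_pp (w := f k s)).
- rewrite -sorted_pairwise; last by move=> v u w; exact: leq_trans.
  by apply: sort_sorted => u v; exact: leq_total.
- by rewrite sort_uniq undup_uniq.
- by apply/allP => u /Hmem /pprefixW.
Qed.

Definition gapfree k (a b : seq bool) :=
  [&& pprefix a b, cw k b & [forall t, ~~ (pprefix a (f k t) && pprefix (f k t) b)]].

Lemma path_gap k w a l : pairwise (@pprefix) (a :: l) ->
  all (fun c => cw k c && prefix c w) (a :: l) ->
  (forall c, cw k c -> prefix c w -> pprefix a c -> c \in l) -> path (gapfree k) a l.
Proof.
elim: l a => [//|b l IH] a /= /andP[/andP[Hab Hal] /andP[Hbl Hl]].
case/and3P => /andP[Ca Pa] /andP[Cb Pb] Hall Hc.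
apply/andP; split.
  rewrite /gapfree Hab Cb /=; apply/forallP => t; apply/negP => /andP[H1 H2].
  have := Hc (f k t) (cw_f k t) (prefix_trans (pprefixW H2) Pb) H1.
  rewrite inE => /orP[/eqP E|Ht]; first by rewrite E pprefix_irr in H2.
  have := allP Hbl _ Ht => H4; have := pprefix_trans H4 H2; by rewrite pprefix_irr.
apply: IH => //; first by rewrite /= Hbl Hl.
- by rewrite /= Cb Pb Hall.
- move=> c Cc Pc Hbc; have := Hc c Cc Pc (pprefix_trans Hab Hbc).
  rewrite inE => /orP[/eqP E|//]; by rewrite E pprefix_irr in Hbc.
Qed.

Lemma chain_struct k s : exists c l, [/\ chain F k s = c :: l, path (gapfree k) c l, cw k c,
  (forall t, ~~ pprefix (f k t) c) & prefix c (f k s)].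
Proof.
case E: (chain F k s) => [|c l].
  by have := mem_chain k s (f k s); rewrite E cw_f prefix_refl.
have Hs := chain_sorted k s; rewrite sorted_pairwise in Hs; last exact: pprefix_trans.
rewrite E in Hs.
have Hc : c \in chain F k s by rewrite E mem_head.
rewrite mem_chain in Hc; case/andP: Hc => Cc Pc.
exists c, l; split => //.
- apply: (path_gap (w := f k s)) => //.
  + by apply/allP => u Hu; rewrite -mem_chain E.
  + move=> u Cu Pu Hcu; have : u \in chain F k s by rewrite mem_chain Cu Pu.
    rewrite E inE => /orP[/eqP Eu|//]; by rewrite Eu pprefix_irr in Hcu.
- move=> t; apply/negP => Ht.
  have : f k t \in chain F k s by rewrite mem_chain cw_f (prefix_trans (pprefixW Ht) Pc).
  rewrite E inE => /orP[/eqP Eu|Hu]; first by rewrite Eu pprefix_irr in Ht.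
  move: Hs; rewrite /= => /andP[/allP /(_ _ Hu) H _].
  by have := pprefix_trans H Ht; rewrite pprefix_irr.
Qed.

Lemma chain_min k s : (forall t, ~~ pprefix (f k t) (f k s)) -> chain F k s = [:: f k s].
Proof.
move=> Hmin; apply: (irr_sorted_eq pprefix_trans pprefix_irr) => //.
  exact: chain_sorted.
move=> u; rewrite mem_chain inE; apply/idP/idP.
  case/andP => /cwP [t <-] Hp; apply/negPn/negP => Hne.
  by have := Hmin t; rewrite pprefixE Hp Hne.
by move/eqP->; rewrite cw_f prefix_refl.
Qed.

Lemma chain_ext k s x : pprefix (f k s) (f k x) -> exists b l, chain F k x = chain F k s ++ b :: l.
Proof.
move=> Hsx.
pose T : seq (seq bool) := filter (fun c : seq bool => ~~ prefix c (f k s)) (chain F k x).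
have ET : chain F k x = chain F k s ++ T.
  apply: (irr_sorted_eq pprefix_trans pprefix_irr); first exact: chain_sorted.
    rewrite sorted_pairwise; last exact: pprefix_trans.
    rewrite pairwise_cat; apply/and3P; split.
    - apply/allrelP => c d; rewrite mem_chain => /andP[Cc Pc].
      rewrite mem_filter mem_chain => /andP[Nd /andP[Cd Pd]].
      have Pcx := prefix_trans Pc (pprefixW Hsx).
      case/orP: (prefix_comp Pcx Pd) => H.
        rewrite pprefixE H /=; apply: contraNneq Nd => <-; exact: Pc.
      by rewrite (prefix_trans H Pc) in Nd.
    - by rewrite -sorted_pairwise; [exact: chain_sorted | exact: pprefix_trans].
    - rewrite -sorted_pairwise; last exact: pprefix_trans.
      apply: sorted_filter; [exact: pprefix_trans | exact: chain_sorted].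
  move=> u; rewrite mem_chain mem_cat mem_chain /T mem_filter mem_chain.
  case Hu: (prefix u (f k s)); case: (cw k u) => //=.
  by rewrite (prefix_trans Hu (pprefixW Hsx)).
case ET' : T => [|b l].
  have : f k x \in T by rewrite /T mem_filter mem_chain cw_f prefix_refl !andbT;
    apply/negP => H; have := pprefix_prefix_trans Hsx H; rewrite pprefix_irr.
  by rewrite ET'.
by exists b, l; rewrite ET ET'.
Qed.


Definition Rr (a : seq bool) (l : seq (seq bool)) :=
  flatten (map ddgamma_rest (pairmap (fun u v => drop (size u) v) a l)).

Lemma Rr_cons a b l : Rr a (b :: l) = [:: false, false & drop 2 (drop (size a) b)] ++ Rr b l.
Proof. by []. Qed.

Lemma Rr_nil a : Rr a [::] = [::].
Proof. by []. Qed.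

Arguments Rr : simpl never.

Lemma Rr_cat a l1 l2 : Rr a (l1 ++ l2) = Rr a l1 ++ Rr (last a l1) l2.
Proof. by rewrite /Rr pairmap_cat map_cat flatten_cat. Qed.

Lemma ddotE k s c l : chain F k s = c :: l -> ddot_f F k s = ddgamma_first F k c ++ Rr c l.
Proof. by rewrite /ddot_f /gammas => ->; rewrite /= drop0. Qed.

Lemma ddot_dep k s x : f k s = f k x -> ddot_f F k s = ddot_f F k x.
Proof. by move=> H; rewrite /ddot_f /gammas /chain H. Qed.

Lemma ddot_ext k s x : pprefix (f k s) (f k x) ->
  exists z, ddot_f F k x = ddot_f F k s ++ [:: false, false & z].
Proof.
move=> Hsx; have [b [l Ex]] := chain_ext Hsx.
have [c [l0 [Es _ _ _ _]]] := chain_struct k s.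
rewrite Es /= in Ex.
rewrite (ddotE Ex) (ddotE Es) Rr_cat Rr_cons.
by exists (drop 2 (drop (size (last c l0)) b) ++ Rr b l); rewrite catA.
Qed.

Lemma ddot_min k s : (forall t, ~~ pprefix (f k t) (f k s)) ->
  ddot_f F k s = ddgamma_first F k (f k s).
Proof. by move/chain_min => E; rewrite (ddotE E) Rr_nil cats0. Qed.

Lemma sibling k a b b' : cw k a -> gapfree k a b -> gapfree k a b' ->
  comp (drop 2 (drop (size a) b)) (drop 2 (drop (size a) b')) -> b = b'.
Proof.
case/cwP => s0 <- /and3P[Hab /cwP[t Et] Gb] /and3P[Hab' /cwP[t' Et'] Gb'] Hc.
subst b b'.
have := Hab; rewrite pprefixE => /andP[/prefixP [g Hg] Hne].
have := Hab'; rewrite pprefixE => /andP[/prefixP [g' Hg'] Hne'].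
have Hg0 : g != [::] by apply: contraNneq Hne => Eg; rewrite Hg Eg cats0.
have Hg0' : g' != [::] by apply: contraNneq Hne' => Eg; rewrite Hg' Eg cats0.
have HT := ext_same Hg Hg' Hg0 Hg0'.
rewrite Hg Hg' !drop_size_cat // in Hc.
have Hbb : comp (f k t) (f k t').
  rewrite Hg Hg' comp_cat -(cat_take_drop 2 g) -(cat_take_drop 2 g') HT comp_cat //.
case/orP: Hbb => H; apply/eqP; apply/negPn/negP => Hn.
- move/forallP: Gb' => /(_ t).
  by rewrite Hab pprefixE H Hn.
- move/forallP: Gb => /(_ t').
  by rewrite Hab' pprefixE H eq_sym Hn.
Qed.

Lemma Rr_cmp k a l l' : cw k a -> path (gapfree k) a l -> path (gapfree k) a l' ->
  prefix (Rr a l) (Rr a l') -> prefix l l'.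
Proof.
elim: l a l' => [|b l IH] a l' Ca; first by move=> *; rewrite prefix0s.
move=> /andP[Hab Hl]; case: l' => [|b' l'].
  by move=> _; rewrite Rr_cons Rr_nil prefixs0.
move=> /andP[Hab' Hl']; rewrite !Rr_cons /= => Hp.
have Hcmp : comp (drop 2 (drop (size a) b)) (drop 2 (drop (size a) b')).
  apply: (prefix_comp (w := drop 2 (drop (size a) b') ++ Rr b' l')).
    exact: catl_prefix Hp.
  exact: prefix_prefix.
have Ebb := sibling Ca Hab Hab' Hcmp; subst b'.
move: Hp; rewrite prefix_catl2 => Hp.
have Cb : cw k b by case/and3P: Hab.
by rewrite eqxx (IH b l' Cb Hl Hl' Hp).
Qed.

Lemma D4 k g : #|P2 F k| = 4 -> ddgamma_first F k g = g.
Proof. by move=> H; rewrite /ddgamma_first H. Qed.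

Lemma no_single k s a b : t2 a b \notin P2 F k -> f k s != [:: a].
Proof.
move=> Hab; apply/eqP => Hs.
have [x1 [x' Hp]] := P1 b (H3 (tau k s)).
move/negP: Hab; apply; apply/P2P; exists s, (x1 :: x').
by rewrite fstar_cons Hs val_t2 prefix_catl2.
Qed.

Lemma no_empty3 k s : #|P2 F k| = 3 -> f k s != [::].
Proof. move=> H; apply/eqP => /empty_tau [_]; by rewrite H. Qed.

Lemma D3 k a b c : #|P2 F k| = 3 -> t2 a b \notin P2 F k ->
  (forall x y, t2 x y \notin P2 F k -> x = a /\ y = b) -> cw k c ->
  [\/ c = [:: ~~ a] /\ ddgamma_first F k c = [:: true],
      exists g r, c = [:: ~~ a, g & r] /\ ddgamma_first F k c = [:: true, g & r] |
      exists r, c = [:: a, ~~ b & r] /\ ddgamma_first F k c = [:: false, true & r]].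
Proof.
move=> Hk Hab Hoth /cwP [s Es].
have Hin : forall x y, (x != a) || (y != b) -> t2 x y \in P2 F k.
  move=> x y Hxy; apply/negPn/negP => /Hoth [Ex Ey].
  by rewrite Ex Ey !eqxx in Hxy.
have Ne := no_empty3 s Hk; have Ns := no_single s Hab.
rewrite /ddgamma_first Hk /=.
case: c Es => [|g1 [|g2 r]] Es.
- by rewrite Es eqxx in Ne.
- apply: Or31; split => //; congr [:: _].
  rewrite Es in Ns; clear -Ns; move: Ns; by case: g1; case: a.
- have Hg : t2 g1 g2 \in P2 F k.
    apply/P2P; exists s, [::]; rewrite fstar_cons Es fstar_nil cats0.
    by rewrite val_t2 /= !eqxx prefix0s.
  case E: (g1 == a).
  + move/eqP: E => E; subst g1.
    have Hg2 : g2 = ~~ b.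
      have : g2 != b by apply: contraNneq Hab => <-.
      clear; by case: g2; case: b.
    subst g2; rewrite negbK.
    have -> : ([tuple a; b] \in P2 F k) = false by apply/negbTE.
    by apply: Or33; exists r.
  + have -> : ([tuple g1; ~~ g2] \in P2 F k) by apply: Hin; rewrite E.
    apply: Or32; exists g2, r; split => //.
    clear -E; move: E; by case: g1; case: a.
Qed.


Lemma comp_min k c c' : cw k c -> cw k c' -> (forall t, ~~ pprefix (f k t) c) ->
  (forall t, ~~ pprefix (f k t) c') -> comp c c' -> c = c'.
Proof.
move=> /cwP[t Et] /cwP[t' Et'] Mc Mc' /orP[H|H]; apply/eqP; apply/negPn/negP => Hn.
- by have := Mc' t; rewrite Et pprefixE H Hn.
- by have := Mc t'; rewrite Et' pprefixE H eq_sym Hn.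
Qed.

Lemma D_cmp k c c' : cw k c -> cw k c' -> (forall t, ~~ pprefix (f k t) c) ->
  (forall t, ~~ pprefix (f k t) c') ->
  comp (ddgamma_first F k c) (ddgamma_first F k c') -> c = c'.
Proof.
move=> Cc Cc' Mc Mc' Hd; apply: (@comp_min k) => //.
case: (H34 k) => Hk; last by rewrite !D4 in Hd.
have [a [b [Hab Hoth]]] := card3E Hk.
case: (D3 Hk Hab Hoth Cc) => [[E1 E2]|[g [r [E1 E2]]]|[r [E1 E2]]];
case: (D3 Hk Hab Hoth Cc') => [[E1' E2']|[g' [r' [E1' E2']]]|[r' [E1' E2']]];
rewrite E1 E1'; rewrite E2 E2' in Hd; rewrite ?comp_cons ?eqxx ?comp0s //= in Hd *.
Qed.

Lemma ddot_cmp k s x : prefix (ddot_f F k s) (ddot_f F k x) -> prefix (f k s) (f k x).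
Proof.
have [c [l [Es Ps Cc Mc _]]] := chain_struct k s.
have [c' [l' [Ex Px Cc' Mc' _]]] := chain_struct k x.
rewrite (ddotE Es) (ddotE Ex) => Hp.
have Hcc : c = c'.
  apply: (@D_cmp k) => //.
  apply: (prefix_comp (w := ddgamma_first F k c' ++ Rr c' l')); last exact: prefix_prefix.
  exact: catl_prefix Hp.
subst c'.
move: Hp; rewrite prefix_catl2 => /(Rr_cmp Cc Ps Px) Hll.
have : f k s \in chain F k x.
  have : f k s \in chain F k s by rewrite mem_chain cw_f prefix_refl.
  rewrite Es Ex; apply: prefix_mem; by rewrite prefix_cons eqxx.
by rewrite mem_chain => /andP[].
Qed.


Local Notation G := (ddot F).

Lemma fstarG_cons k a x : fstar G k (a :: x) = ddot_f F k a ++ fstar G (tau k a) x.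
Proof. by []. Qed.

Lemma ddot_head3 k x : #|P2 F k| = 3 ->
  prefix [:: true] (ddot_f F k x) \/ prefix [:: false; true] (ddot_f F k x).
Proof.
move=> Hk; have [a [b [Hab Hoth]]] := card3E Hk.
have [c [l [Es _ Cc _ _]]] := chain_struct k x.
rewrite (ddotE Es).
case: (D3 Hk Hab Hoth Cc) => [[_ ->]|[g [r [_ ->]]]|[r [_ ->]]]; [left|left|right] => /=;
  by rewrite ?eqxx ?prefix0s.
Qed.

Lemma ddot01 k : #|P2 F k| = 3 -> exists x, prefix [:: false; true] (ddot_f F k x).
Proof.
move=> Hk; have [a [b [Hab Hoth]]] := card3E Hk.
have Hin : t2 a (~~ b) \in P2 F k.
  apply/negPn/negP => /Hoth [_]; clear; by case: b.
case/P2P: Hin => x1 [x' Hp]; exists x1.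
rewrite fstar_cons in Hp.
have [c [l [Es _ Cc _ Pc]]] := chain_struct k x1.
rewrite (ddotE Es).
have Ne := no_empty3 x1 Hk; have Ns := no_single x1 Hab.
have [r Hr] : exists r, f k x1 = [:: a, ~~ b & r].
  move: Hp Ne Ns; case: (f k x1) => [|g1 [|g2 r]] //=.
    by move=> /andP[/eqP <- _] _; rewrite eqxx.
  by move=> /andP[/eqP <- /andP[/eqP <- _]] _ _; exists r.
rewrite Hr in Pc.
case: (D3 Hk Hab Hoth Cc) => [[E1 _]|[g [r' [E1 _]]]|[r' [_ ->]]].
- move: Pc; rewrite E1 /=; clear; by case: a.
- move: Pc; rewrite E1 /=; clear; by case: a.
- by rewrite /= ?eqxx ?prefix0s.
Qed.

Lemma ddot1 k : #|P2 F k| = 3 -> exists x, prefix [:: true] (ddot_f F k x).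
Proof.
move=> Hk; have [a [b [Hab Hoth]]] := card3E Hk.
have [x1 [x' Hp]] := P1 (~~ a) (H3 k); exists x1.
rewrite fstar_cons in Hp.
have [c [l [Es _ Cc _ Pc]]] := chain_struct k x1.
rewrite (ddotE Es).
have Ne := no_empty3 x1 Hk.
have [r Hr] : exists r, f k x1 = ~~ a :: r.
  move: Hp Ne; case: (f k x1) => [|g1 r] //=.
  by move=> /andP[/eqP <- _] _; exists r.
rewrite Hr in Pc.
case: (D3 Hk Hab Hoth Cc) => [[_ ->]|[g [r' [_ ->]]]|[r' [E1 _]]].
- by rewrite /= ?prefix0s.
- by rewrite /= ?prefix0s.
- move: Pc; rewrite E1 /=; clear; by case: a.
Qed.

Lemma ddot_empty k s0 : #|P2 F k| = 4 -> f k s0 = [::] -> ddot_f F k s0 = [::].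
Proof.
move=> Hk H0; rewrite ddot_min ?H0 ?D4 // => t.
by rewrite /pprefix ltn0 andbF.
Qed.

Lemma ddotP1_3 k g : #|P2 F k| = 3 -> exists x1 x', prefix [:: g] (fstar G k (x1 :: x')).
Proof.
move=> Hk; case: g.
- have [x Hx] := ddot1 Hk; exists x, [::].
  by rewrite fstarG_cons fstar_nil cats0.
- have [x Hx] := ddot01 Hk; exists x, [::].
  rewrite fstarG_cons fstar_nil cats0.
  exact: (@catl_prefix _ [:: false] _ [:: true] Hx).
Qed.

Lemma ddotP1 k g : exists x1 x', prefix [:: g] (fstar G k (x1 :: x')).
Proof.
case: (H34 k) => Hk; first exact: ddotP1_3.
case: (pickP (fun s0 => f k s0 == [::])) => [s0 /eqP H0|Hne].
  have [Ht _] := empty_tau H0.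
  have [x1 [x' Hp]] := ddotP1_3 g Ht.
  by exists s0, (x1 :: x'); rewrite fstarG_cons (ddot_empty Hk H0).
have [x1 [x' Hp]] := P1 g (H3 k).
rewrite fstar_cons in Hp.
have [c [l [Es _ Cc _ Pc]]] := chain_struct k x1.
exists x1, [::]; rewrite fstarG_cons fstar_nil cats0 (ddotE Es) D4 //.
have [r Hr] : exists r, f k x1 = g :: r.
  move: Hp (Hne x1); case: (f k x1) => [|g1 r] //=.
  by move=> /andP[/eqP <- _] _; exists r.
rewrite Hr in Pc.
case/cwP: Cc => s' Es'.
move: Pc (Hne s'); rewrite Es'; case: c {Es Es'} => [|g1 r'] //=.
by move=> /andP[/eqP -> _] _; rewrite eqxx prefix0s.
Qed.


Lemma mem3 (T : finType) (z a b c : T) : (z \in [set a; b; c]) = [|| z == a, z == b | z == c].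
Proof. by rewrite !inE !orbA. Qed.

Lemma mem4 (T : finType) (z a b c d : T) :
  (z \in [set a; b; c; d]) = [|| z == a, z == b, z == c | z == d].
Proof. by rewrite !inE !orbA. Qed.

Lemma part_i3 k : #|P2 F k| = 3 ->
  P2 G k = [set t2 false true; t2 true false; t2 true true].
Proof.
move=> Hk; apply/setP => c; case: (tuple2E c) => x [y ->] {c}.
rewrite mem3 !t2_inj; apply/idP/idP.
  case/P2P => x1 [x' Hp]; rewrite fstarG_cons in Hp.
  case: (ddot_head3 x1 Hk) => H.
    move: (prefix_comp Hp (prefix_catl (fstar G (tau k x1) x') H)).
    clear; by rewrite /comp; case: x; case: y.
  move: (prefix_comp Hp (prefix_catl (fstar G (tau k x1) x') H)).
  clear; by rewrite /comp; case: x; case: y.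
have [a [b [Hab Hoth]]] := card3E Hk.
case: x => /=; last first.
  case: y => //= _.
  have [x1 Hx] := ddot01 Hk; apply/P2P; exists x1, [::].
  by rewrite fstarG_cons fstar_nil cats0.
move=> _.
case: (pickP (fun s' => f k s' == [:: ~~ a])) => [s' /eqP Hs'|Hno].
  have Hd : ddot_f F k s' = [:: true].
    rewrite ddot_min Hs'; first by rewrite /ddgamma_first Hk.
    move=> t; rewrite pprefixE prefixs1; apply/negP => /andP[/orP[/eqP E|/eqP E] Hn].
      by have := no_empty3 t Hk; rewrite E.
    by rewrite E eqxx in Hn.
  have [x1 [x' Hp]] := ddotP1 (tau k s') y.
  apply/P2P; exists s', (x1 :: x').
  by rewrite fstarG_cons Hd val_t2 prefix_catl2.
have Hin : t2 (~~ a) y \in P2 F k.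
  apply/negPn/negP => /Hoth [E _]; clear -E; by case: a E.
case/P2P: Hin => x1 [x' Hp]; rewrite fstar_cons in Hp.
have [c [l [Es _ Cc _ Pc]]] := chain_struct k x1.
apply/P2P; exists x1, [::]; rewrite fstarG_cons fstar_nil cats0 (ddotE Es).
have Ne := no_empty3 x1 Hk; have N1 := Hno x1.
have [r Hr] : exists r, f k x1 = [:: ~~ a, y & r].
  move: Hp Ne N1; case: (f k x1) => [|g1 [|g2 r]] //=.
    by move=> /andP[/eqP <- _] _; rewrite eqxx.
  by move=> /andP[/eqP <- /andP[/eqP <- _]] _ _; exists r.
rewrite Hr in Pc.
case: (D3 Hk Hab Hoth Cc) => [[E1 _]|[g [r' [E1 ->]]]|[r' [E1 _]]].
- case/cwP: Cc => s'' Es''; have := Hno s''; by rewrite Es'' E1 eqxx.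
- move: Pc; rewrite E1 /= eqxx /= => /andP[/eqP -> _].
  by rewrite /= !eqxx prefix0s.
- move: Pc; rewrite E1 /=; clear; by case: a.
Qed.

Lemma other_nonempty k s0 : f k s0 = [::] -> exists t, f k t != [::].
Proof.
move=> H0; have [t Ht] := exists_other s0; exists t; apply/eqP => Et.
have Hne : s0 != t by rewrite eq_sym.
have := disj_card (Hdec.2 k s0 t Hne (etrans H0 (esym Et))).
have := H3 (tau k s0); have := H3 (tau k t); lia.
Qed.

Lemma part_i4 k : #|P2 F k| = 4 ->
  P2 G k = [set t2 false false; t2 false true; t2 true false; t2 true true].
Proof.
move=> Hk; apply/setP => c; case: (tuple2E c) => x [y ->] {c}.
have -> : t2 x y \in [set t2 false false; t2 false true; t2 true false; t2 true true].
  by rewrite mem4 !t2_inj; case: x; case: y.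
case: (pickP (fun s0 => f k s0 == [::])) => [s0 /eqP H0|Hne].
  have [Ht _] := empty_tau H0.
  have Hd0 := ddot_empty Hk H0.
  case E: (x || y).
    have : t2 x y \in P2 G (tau k s0).
      by rewrite (part_i3 Ht) mem3 !t2_inj; move: E; case: x; case: y.
    case/P2P => x1 [x' Hp]; apply/P2P; exists s0, (x1 :: x').
    by rewrite fstarG_cons Hd0.
  have [t Ht'] := other_nonempty H0.
  have Hpp : pprefix (f k s0) (f k t).
    by rewrite H0 /pprefix prefix0s /= lt0n size_eq0.
  have [z Ez] := ddot_ext Hpp.
  apply/P2P; exists t, [::]; rewrite fstarG_cons fstar_nil cats0 Ez Hd0.
  move: E; case: x; case: y => //= _; by rewrite ?prefix0s.
have Hin := card4E Hk x y.
case/P2P: Hin => x1 [x' Hp]; rewrite fstar_cons in Hp.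
have [c [l [Es _ Cc Mc Pc]]] := chain_struct k x1.
case/cwP: (Cc) => s' Es'.
have Hd : ddot_f F k s' = c by rewrite ddot_min Es' ?D4.
have Hcmp := prefix_comp Hp (prefix_catl (fstar F (tau k x1) x') Pc).
move: (Hne s') Hcmp; rewrite Es'; case: c {Es Es' Cc Mc Pc Hd} (Hd) => [|g1 [|g2 r]] Hd //= _.
  rewrite /comp /= => Hg1.
  have Eg : g1 = x by move: Hg1; clear; case: x; case: g1.
  have [x2 [x'' Hp2]] := ddotP1 (tau k s') y.
  apply/P2P; exists s', (x2 :: x'').
  by rewrite fstarG_cons Hd val_t2 Eg prefix_catl2.
rewrite /comp /= => Hg.
apply/P2P; exists s', [::]; rewrite fstarG_cons fstar_nil cats0 Hd /=.
move: Hg; clear; by case: x; case: y; case: g1; case: g2; rewrite /= ?prefix0s.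
Qed.


Lemma PbarG k s c : c \in Pbark G k (ddot_f F k s) 2 ->
  c = t2 false false /\ exists t, pprefix (f k s) (f k t).
Proof.
case/PbarP => x1 [x' [Hp Hpp]].
have H1 := ddot_cmp (pprefixW Hpp).
have H2 : pprefix (f k s) (f k x1).
  rewrite pprefixE H1 /=; apply/negP => /eqP E.
  by move: Hpp; rewrite (ddot_dep E) pprefix_irr.
split; last by exists x1.
have [z Ez] := ddot_ext H2.
move: Hp; rewrite fstarG_cons Ez -catA prefix_catl2.
case: (tuple2E c) => x [y ->] /=.
by case: x; case: y.
Qed.

Lemma part_ii k s :
  (Pbark F k (f k s) 0 = set0 -> Pbark G k (ddot_f F k s) 2 = set0) /\
  (Pbark F k (f k s) 0 != set0 -> Pbark G k (ddot_f F k s) 2 = [set t2 false false]).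
Proof.
split.
  move=> H0; apply/setP => c; rewrite in_set0; apply/negbTE/negP => /PbarG [_ [t Ht]].
  have : [tuple] \in Pbark F k (f k s) 0.
    apply/PbarP; exists t, [::]; split => //.
    by rewrite cats0 fstar_cons fstar_nil cats0 pprefixW.
  by rewrite H0 in_set0.
case/set0Pn => c0 /PbarP [t [_ [_ Ht]]].
apply/setP => c; rewrite in_set1; apply/idP/eqP => [/PbarG [-> _] //|->].
have [z Ez] := ddot_ext Ht.
apply/PbarP; exists t, [::]; split.
  by rewrite fstarG_cons fstar_nil cats0 Ez prefix_catl2 /= ?prefix0s.
rewrite /= Ez pprefixE prefix_prefix /=; apply/negP => /eqP /(congr1 size).
rewrite size_cat /=; lia.
Qed.

End Main.

Unset Implicit Arguments.

Theorem lemma26 (S : finType) (HS : 1 < #|S|) (R : realType) (mu : S -> R)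
  (Hmu_pos : forall s, (0 < mu s)%R /\ (mu s <= 1)%R)
  (Hmu_sum : (\sum_(s : S) mu s)%R = 1%R)
  (m : nat) (F : code_tuple S m) (HF : in_F2 mu F) (i : 'I_m) :
  (#|P2 F i| = 3 ->
     P2 (ddot F) i = [set [tuple false; true]; [tuple true; false]; [tuple true; true]]) /\
  (#|P2 F i| = 4 ->
     P2 (ddot F) i = [set [tuple false; false]; [tuple false; true];
                          [tuple true; false]; [tuple true; true]]) /\
  (forall s : S,
     (Pbark F i (ct_f F i s) 0 = set0 -> Pbark (ddot F) i (ddot_f F i s) 2 = set0) /\
     (Pbark F i (ct_f F i s) 0 != set0 ->
        Pbark (ddot F) i (ddot_f F i s) 2 = [set [tuple false; false]])).
Proof.
case: HF => _ [Hdec H3].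
split; [|split].
- exact: part_i3.
- exact: part_i4.
- move=> s; exact: part_ii.
Qed.
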